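(* Consider the single-target search setting described in the context, with planning horizon $T\geq 1$, discount factor $\lambda\in[0,1]$, and probability of detection $P_d\in(0,1]$, under the ideal measurement set assumptions (i) $\Sigma=0$ (target-generated measurements are error-free) and (ii) $\lambda_{FA}=0$ (no false alarms). Then the suboptimal (open-loop) control approach and the optimal (Bellman-type, closed-loop) control approach generate identical first actions, i.e. $\hat{a}^\star_1=a^\star_1$, where $$a^\star_1=\operatorname{argmin}_{a_1}\Big[\min_{a_{2:T}}\ \mathbb{E}_{z_{1:T}}\Big[\sum_{t=1}^T\lambda^{t-1}r_t(z_{1:t},a_{1:t})\Big]\Big]$$ and $$\hat{a}^\star_1=\operatorname{argmin}_{a_1}\mathbb{E}_{z_1}\Big[r_1(z_1,a_1)+\lambda\min_{a_2}\mathbb{E}_{z_2\mid z_1}\Big[r_2(z_{1:2},a_{1:2})+\lambda\min_{a_3}\mathbb{E}_{z_3\mid z_{1:2}}\Big[r_3(z_{1:3},a_{1:3})+\cdots+\lambda\min_{a_T}\mathbb{E}_{z_T\mid z_{1:T-1}}\big[r_T(z_{1:T},a_{1:T})\big]\Big]\Big]\Big],$$ this holding irrespective of the length $T$ of the planning horizon. (In the optimal approach, each inner minimisation over $a_t$ is performed separately for each realisation of the earlier measurements $z_{1:t-1}$, whereas in the suboptimal approach $a_{2:T}$ are chosen jointly, independently of the measurements.)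
   Context: Target model: there is either zero or one stationary target. The hypotheses are $x_0$ (''no target present'') and $x_1,\dots,x_n\in\mathbb{R}^2$ (''a target exists at $x_i$''), with prior probabilities $p(x_0)=1-r$ and $p(x_i)=r\,w_i$ for $i\ge 1$, where $r\in[0,1]$ is the probability of existence and $w_i\ge 0$, $\sum_{i=1}^n w_i=1$. Actions $a$ belong to a finite set $\mathbb{A}$; each action $a$ determines a sensor field of view $\mathrm{FOV}(a)\subseteq\mathbb{R}^2$ (possibly empty, e.g. ''do not observe''). At each time $t=1,\dots,T$ an action $a_t$ is taken and a (finite set-valued) measurement $z_t$ is received; conditional on the hypothesis, measurements at different times are independent. General measurement model: if the hypothesis is $x_i$ with $i>0$ and $x_i\in\mathrm{FOV}(a_t)$, the target is detected with probability $P_d$, producing a measurement distributed as $\mathcal{N}(x_i,\Sigma)$; otherwise no target-generated measurement occurs; in addition a Poisson number (mean $\lambda_{FA}$ times the area of the FOV) of false alarms uniformly distributed in the FOV is generated. Under the ideal assumptions $\Sigma=0$, $\lambda_{FA}=0$ this means: $z_t=\{x_i\}$ with probability $P_d$ and $z_t=\emptyset$ with probability $1-P_d$ if $i>0$ and $x_i\in\mathrm{FOV}(a_t)$, and $z_t=\emptyset$ otherwise. Posterior hypothesis probabilities are $p(x_i\mid z_{1:t},a_{1:t})\propto p(x_i)\prod_{j=1}^t p(z_j\mid x_i,a_j)$ for $i=0,\dots,n$, and posterior location weights given existence are $w^i_{1:t}\propto p(x_i)\prod_{j=1}^t p(z_j\mid x_i,a_j)$ for $i\ge1$, normalised so $\sum_{i\ge1}w^i_{1:t}=1$.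 GOSPA cost (parameters $p=2$, $\alpha=2$, cut-off $c>0$) between at-most-one-element sets: $d(\emptyset,\emptyset)^2=0$; $d(\{x\},\emptyset)^2=d(\emptyset,\{y\})^2=c^2/2$; $d(\{x\},\{y\})^2=\min(\|x-y\|^2,c^2)$. The per-step cost is $r_t(z_{1:t},a_{1:t})=\mathrm{MMS\text{-}GOSPA}(z_{1:t},a_{1:t})=\min_{\hat X\in\{\emptyset,\{\hat X_e\}\}}\sum_{i=0}^n d(X_i,\hat X)^2\,p(x_i\mid z_{1:t},a_{1:t})$, where $X_0=\emptyset$, $X_i=\{x_i\}$ for $i\ge1$, and $\hat X_e=\sum_{i=1}^n w^i_{1:t}x_i$ is the posterior mean location. Expectations $\mathbb{E}_{z_{1:T}}$ are with respect to the joint (prior-predictive) distribution of measurements given the actions, and $\mathbb{E}_{z_t\mid z_{1:t-1}}$ with respect to the predictive distribution of $z_t$ given the earlier measurements and actions. Ties in the argmin are broken by the same rule in both approaches. *)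

(* Defs.v *)
From HB Require Import structures.
From mathcomp Require Import all_boot all_order all_algebra.
Set Implicit Arguments. Unset Strict Implicit. Unset Printing Implicit Defensive.
Import Order.TTheory GRing.Theory Num.Theory.
Local Open Scope ring_scope.

(* Hypotheses are [option 'I_n]: [None] = x_0 ("no target"),
   [Some i] = "target at loc i".  Measurements under the ideal assumptions
   (Sigma = 0, lambda_FA = 0) are sets with at most one element, encoded as
   [option 'rV[R]_2]: [None] = empty set, [Some y] = {y}. *)
Record scenario (R : realFieldType) (n : nat) (A : finType) := Scenario {
  loc : 'I_n -> 'rV[R]_2;
  fov : A -> pred 'rV[R]_2;
  pex : R;
  wt  : 'I_n -> R;
  pd  : R;
  cut : R
}.

Section Model.
Context {R : realFieldType} {n : nat} {A : finType} (S : scenario R n A).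

Definition hyp := option 'I_n.
Definition meas := option 'rV[R]_2.

Definition sqnorm (v : 'rV[R]_2) : R := \sum_(j < 2) v ord0 j ^+ 2.

Definition prior (h : hyp) : R :=
  match h with None => 1 - pex S | Some i => pex S * wt S i end.

Definition lik (h : hyp) (a : A) (z : meas) : R :=
  match h with
  | None => if z is None then 1 else 0
  | Some i =>
      if fov S a (loc S i) then
        match z with None => 1 - pd S | Some y => if y == loc S i then pd S else 0 end
      else (if z is None then 1 else 0)
  end.

Definition qpost (as_ : seq A) (zs : seq meas) (h : hyp) : R :=
  prior h * \prod_(p <- zip as_ zs) lik h p.1 p.2.

Definition post (as_ : seq A) (zs : seq meas) (h : hyp) : R :=
  qpost as_ zs h / \sum_(h' : hyp) qpost as_ zs h'.

Definition wpost (as_ : seq A) (zs : seq meas) (i : 'I_n) : R :=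
  qpost as_ zs (Some i) / \sum_(j < n) qpost as_ zs (Some j).

Definition pmean (as_ : seq A) (zs : seq meas) : 'rV[R]_2 :=
  \sum_(i < n) wpost as_ zs i *: loc S i.

(* per-step cost r_t = MMS-GOSPA (p = 2, alpha = 2, cut-off c) *)
Definition rcost (as_ : seq A) (zs : seq meas) : R :=
  let c2 := cut S ^+ 2 in
  let Xe := pmean as_ zs in
  Num.min
    (* estimate = empty set *)
    (\sum_(i < n) (c2 / 2) * post as_ zs (Some i))
    (* estimate = {Xe} *)
    ((c2 / 2) * post as_ zs None +
     \sum_(i < n) Num.min (sqnorm (loc S i - Xe)) c2 * post as_ zs (Some i)).

(* the (finite) set of measurement values with possibly nonzero probability;
   all other values have probability zero, so sums over it are expectations *)
Definition msupp : seq meas := undup (None :: [seq Some (loc S i) | i <- enum 'I_n]).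

Fixpoint allseqs (k : nat) : seq (seq meas) :=
  if k is k'.+1 then [seq z :: zs | z <- msupp, zs <- allseqs k'] else [:: [::]].

Definition pjoint (as_ : seq A) (zs : seq meas) : R := \sum_(h : hyp) qpost as_ zs h.

Definition pred_meas (pas : seq A) (zs : seq meas) (a : A) (z : meas) : R :=
  \sum_(h : hyp) post pas zs h * lik h a z.

(* minimum of a function over a finite type (0 on an empty type) *)
Definition fmin {U : finType} (f : U -> R) : R :=
  match [pick u : U] with
  | Some u0 => \big[Num.min/f u0]_(u : U) f u
  | None => 0
  end.

Definition open_cost (lam : R) (T : nat) (as_ : seq A) : R :=
  \sum_(zs <- allseqs T)
     pjoint as_ zs * \sum_(t < T) lam ^+ t * rcost (take t.+1 as_) (take t.+1 zs).

Definition J_open (lam : R) (T : nat) (a1 : A) : R :=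
  fmin (fun b : (T.-1).-tuple A => open_cost lam T (a1 :: tval b)).

(* closed-loop nested value: past actions pas, past measurements zs,
   current action a, m further decisions remaining:
   E_{z | past}[ r(pas++a, zs++z) + lam * min_{a'} Q m' (pas++a) (zs++z) a' ] *)
Fixpoint Qval (lam : R) (m : nat) (pas : seq A) (zs : seq meas) (a : A) : R :=
  \sum_(z <- msupp)
     pred_meas pas zs a z *
       (rcost (rcons pas a) (rcons zs z) +
        (if m is m'.+1 then
           lam * fmin (fun a' : A => Qval lam m' (rcons pas a) (rcons zs z) a')
         else 0)).

Definition J_closed (lam : R) (T : nat) (a1 : A) : R :=
  Qval lam T.-1 [::] [::] a1.

End Model.

(* Main.v *)
Require Import Defs.
From HB Require Import structures.
From mathcomp Require Import all_boot all_order all_algebra.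
From Stdlib Require Import FunctionalExtensionality.
Set Implicit Arguments. Unset Strict Implicit. Unset Printing Implicit Defensive.
Import Order.TTheory GRing.Theory Num.Theory.
Local Open Scope ring_scope.

Section Fmin.
Variable R : realFieldType.

Lemma fmin_le (U : finType) (f : U -> R) u : fmin f <= f u.
Proof. rewrite /fmin; case: pickP => [u0 _|/(_ u) //]; exact: bigmin_le. Qed.

Lemma fmin_ex (U : finType) (f : U -> R) (u : U) : exists v, fmin f = f v.
Proof.
rewrite /fmin; case: pickP => [u0 _|/(_ u) //].
apply: (big_ind (fun x => exists v, x = f v)); first by exists u0.
  move=> x y [v1 ->] [v2 ->].
  by case: (leP (f v1) (f v2)) => _; [exists v1 | exists v2].
by move=> v _; exists v.
Qed.

Lemma fmin_eq (U : finType) (f : U -> R) v u0 :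
  v = f u0 -> (forall u, v <= f u) -> fmin f = v.
Proof.
move=> E H; have [u1 E1] := fmin_ex f u0.
apply/le_anti/andP; split; first by rewrite E; exact: fmin_le.
by rewrite E1.
Qed.

Lemma fmin_ext (U : finType) (f g : U -> R) : f =1 g -> fmin f = fmin g.
Proof.
move=> H; rewrite /fmin; case: pickP => // u0 _; rewrite H.
by apply: eq_bigr => u _; exact: H.
Qed.

Lemma fmin_scale (U : finType) (u0 : U) (c : R) (f : U -> R) :
  0 <= c -> fmin (fun u => c * f u) = c * fmin f.
Proof.
move=> c0; have [v Ev] := fmin_ex f u0.
apply: (fmin_eq (u0 := v)); first by rewrite Ev.
by move=> u; rewrite ler_wpM2l // fmin_le.
Qed.

Lemma fmin0 (U : finType) : fmin (fun _ : U => 0 : R) = 0.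
Proof.
rewrite /fmin; case: pickP => // u0 _.
by apply: (big_ind (fun x => x = 0)) => // x y -> ->; rewrite minxx.
Qed.
End Fmin.

Lemma sum_option (R : nmodType) n (f : option 'I_n -> R) :
  \sum_(h : option 'I_n) f h = f None + \sum_(i < n) f (Some i).
Proof.
rewrite (bigD1 None) //=; congr (_ + _).
rewrite (reindex_omap Some id) /=; last by case.
by apply: eq_bigl => i; rewrite eqxx.
Qed.

Section Model.
Variables (R : realFieldType) (n : nat) (A : finType) (S : scenario R n A).
Hypothesis Hr0 : 0 <= pex S.
Hypothesis Hr1 : pex S <= 1.
Hypothesis Hw : forall i, 0 <= wt S i.
Hypothesis Hws : \sum_(i < n) wt S i = 1.
Hypothesis Hpd0 : 0 <= pd S.
Hypothesis Hpd1 : pd S <= 1.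

Lemma prior_ge0 h : 0 <= prior S h.
Proof. by case: h => [i|] /=; [rewrite mulr_ge0 | rewrite subr_ge0]. Qed.

Lemma lik_ge0 h a (z : option 'rV[R]_2) : 0 <= lik S h a z.
Proof.
case: h => [i|] /=; last by case: z.
case: (fov S a (loc S i)); last by case: z.
by case: z => [y|]; [case: eqP | rewrite subr_ge0].
Qed.

Lemma qpost_ge0 as_ zs h : 0 <= qpost S as_ zs h.
Proof.
rewrite /qpost mulr_ge0 ?prior_ge0 //.
by apply: prodr_ge0 => p _; exact: lik_ge0.
Qed.

Lemma pjoint_ge0 as_ zs : 0 <= pjoint S as_ zs.
Proof. by apply: sumr_ge0 => h _; exact: qpost_ge0. Qed.

Lemma post_ge0 as_ zs h : 0 <= post S as_ zs h.
Proof. by rewrite /post divr_ge0 ?qpost_ge0 ?pjoint_ge0. Qed.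

Lemma pjoint_nil : pjoint S [::] [::] = 1.
Proof.
rewrite /pjoint sum_option /qpost /= big_nil mulr1.
under eq_bigr do rewrite big_nil mulr1.
by rewrite -mulr_sumr Hws mulr1 subrK.
Qed.

Definition rest : seq (option 'rV[R]_2) :=
  undup [seq Some (loc S i) | i <- enum 'I_n].

Lemma msuppE : msupp S = None :: rest.
Proof. by rewrite /msupp /= ifN //; apply/mapP => -[]. Qed.

Lemma rest_some z : z \in rest -> exists i, z = Some (loc S i).
Proof. by rewrite mem_undup => /mapP [i _ ->]; exists i. Qed.

Lemma sum_lik h a : \sum_(z <- msupp S) lik S h a z = 1.
Proof.
rewrite msuppE big_cons; case: h => [i|] /=; last first.
  by rewrite big1_seq ?addr0 // => z /andP [_ /rest_some [j ->]].
case Hf: (fov S a (loc S i)); last first.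
  by rewrite big1_seq ?addr0 // => z /andP [_ /rest_some [j ->]] /=.
rewrite (_ : \sum_(j <- rest) _ = \sum_(z <- rest | z == Some (loc S i)) pd S).
  2: by rewrite [RHS]big_mkcond /=; apply: eq_big_seq => z /rest_some [j ->] /=.
rewrite big_const_seq count_uniq_mem ?undup_uniq //.
by rewrite mem_undup map_f ?mem_enum //= addr0 subrK.
Qed.

Lemma sum_allseqs k (g : seq (option 'rV[R]_2) -> R) :
  \sum_(s <- allseqs S k.+1) g s =
  \sum_(z <- msupp S) \sum_(zs <- allseqs S k) g (z :: zs).
Proof. by rewrite /= big_allpairs_dep. Qed.

Lemma sum_prodlik h k as_ : (k <= size as_)%N ->
  \sum_(zs <- allseqs S k) \prod_(p <- zip as_ zs) lik S h p.1 p.2 = 1.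
Proof.
elim: k as_ => [|k IH] [|a as_] //=.
  by rewrite big_seq1 big_nil.
  by rewrite big_seq1 big_nil.
rewrite ltnS => Hk; rewrite big_allpairs_dep /=.
rewrite -[RHS](sum_lik h a); apply: eq_bigr => z _.
under eq_bigr do rewrite big_cons /=.
by rewrite -mulr_sumr IH // mulr1.
Qed.

Lemma marg_h h j k as_ (g : seq (option 'rV[R]_2) -> R) :
  (j <= k)%N -> (k <= size as_)%N ->
  \sum_(zs <- allseqs S k) (\prod_(p <- zip as_ zs) lik S h p.1 p.2) * g (take j zs) =
  \sum_(zs <- allseqs S j) (\prod_(p <- zip (take j as_) zs) lik S h p.1 p.2) * g zs.
Proof.
elim: j k as_ g => [|j IH] k as_ g.
  move=> _ Hk; rewrite /= big_seq1 take0 /= big_nil mul1r.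
  under eq_bigr do rewrite take0.
  by rewrite -mulr_suml sum_prodlik // mul1r.
case: k => [|k] //; case: as_ => [|a as_] //=; rewrite !ltnS => Hj Hk.
rewrite !big_allpairs_dep /=; apply: eq_bigr => z _.
under eq_bigr do rewrite big_cons /= -mulrA.
under [in RHS]eq_bigr do rewrite big_cons /= -mulrA.
by rewrite -!mulr_sumr (IH k as_ (fun s => g (z :: s))).
Qed.

Lemma marg j k as_ (g : seq (option 'rV[R]_2) -> R) :
  (j <= k)%N -> (k <= size as_)%N ->
  \sum_(zs <- allseqs S k) pjoint S as_ zs * g (take j zs) =
  \sum_(zs <- allseqs S j) pjoint S (take j as_) zs * g zs.
Proof.
move=> Hj Hk; rewrite /pjoint.
under eq_bigr do rewrite mulr_suml.
under [in RHS]eq_bigr do rewrite mulr_suml.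
rewrite exchange_big [in RHS]exchange_big /=; apply: eq_bigr => h _.
under eq_bigr do rewrite /qpost -mulrA.
under [in RHS]eq_bigr do rewrite /qpost -mulrA.
by rewrite -!mulr_sumr marg_h.
Qed.


Definition det (zs : seq (option 'rV[R]_2)) := has (fun z => z != None) zs.

Lemma zip_mem (as_ : seq A) (zs : seq (option 'rV[R]_2)) y :
  size as_ = size zs -> Some y \in zs -> exists a, (a, Some y) \in zip as_ zs.
Proof.
elim: zs as_ => [|z zs IH] [|a as_] //= [Hs].
rewrite in_cons => /orP [/eqP <-|/(IH _ Hs) [b Hb]].
  by exists a; rewrite in_cons eqxx.
by exists b; rewrite in_cons Hb orbT.
Qed.

Lemma qpost_det as_ zs y h : size as_ = size zs -> Some y \in zs ->
  qpost S as_ zs h != 0 -> exists2 i, h = Some i & loc S i = y.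
Proof.
move=> Hs Hy; have [a Ha] := zip_mem Hs Hy.
rewrite /qpost mulf_eq0 negb_or => /andP [_ Hp].
have Hl : lik S h a (Some y) != 0.
  apply: contra Hp => Hl; rewrite prodf_seq_eq0; apply/hasP; exists (a, Some y) => //.
move: Hl; clear Hp; case: h => [i|] /=; last by rewrite eqxx.
case: (fov S a (loc S i)); last by rewrite eqxx.
by case: (y =P loc S i) => [E _|_]; [exists i | rewrite eqxx].
Qed.

Lemma sqnorm0 : sqnorm (0 : 'rV[R]_2) = 0.
Proof. by rewrite /sqnorm big1 // => j _; rewrite mxE expr0n. Qed.

Lemma det_rcost as_ zs : det zs -> size as_ = size zs ->
  pjoint S as_ zs * rcost S as_ zs = 0.
Proof.
case/hasP => -[y|] // Hy _ Hs.
have [->|S0] := eqVneq (pjoint S as_ zs) 0; first by rewrite mul0r.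
suff ->: rcost S as_ zs = 0 by rewrite mulr0.
have key := fun h => @qpost_det as_ zs y h Hs Hy.
have qN : qpost S as_ zs None = 0.
  by apply/eqP; apply: contraT => /key [i].
have Ssome : \sum_(j < n) qpost S as_ zs (Some j) = pjoint S as_ zs.
  by rewrite /pjoint sum_option qN add0r.
have Xe : pmean S as_ zs = y.
  rewrite /pmean (eq_bigr (fun i => wpost S as_ zs i *: y)).
    by rewrite -scaler_suml /wpost -mulr_suml Ssome divff // scale1r.
  move=> i _; have [q0|/key [j [<-] ->]] := eqVneq (qpost S as_ zs (Some i)) 0 => //.
  by rewrite /wpost q0 mul0r !scale0r.
have pN : post S as_ zs None = 0 by rewrite /post qN mul0r.
rewrite /rcost Xe pN mulr0 add0r.
rewrite [X in Num.min _ X]big1; last first.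
  move=> i _ /=; have [q0|/key [j [<-] ->]] := eqVneq (qpost S as_ zs (Some i)) 0.
    by rewrite /post q0 mul0r mulr0.
  by rewrite subrr sqnorm0 min_l ?sqr_ge0 // mul0r.
rewrite min_r //; apply: sumr_ge0 => i _.
apply: mulr_ge0; last exact: post_ge0.
by apply: divr_ge0; [exact: sqr_ge0 | exact: ler0n].
Qed.

Lemma qpost_rcons pas zs a z h : size pas = size zs ->
  qpost S (rcons pas a) (rcons zs z) h = qpost S pas zs h * lik S h a z.
Proof. by move=> Hs; rewrite /qpost zip_rcons // big_rcons /= mulrA. Qed.

Lemma pjoint_rcons pas zs a z : size pas = size zs ->
  pjoint S pas zs * pred_meas S pas zs a z = pjoint S (rcons pas a) (rcons zs z).
Proof.
move=> Hs; have [S0|S0] := eqVneq (pjoint S pas zs) 0.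
  rewrite S0 mul0r /pjoint big1 // => h _.
  by rewrite qpost_rcons // (psumr_eq0P (fun h _ => qpost_ge0 pas zs h) S0) ?mul0r.
rewrite /pred_meas mulr_sumr /pjoint; apply: eq_bigr => h _.
by rewrite qpost_rcons // /post mulrA [_ * (_ / _)]mulrC (divfK S0).
Qed.

Variable lam : R.
Hypothesis Hlam : 0 <= lam.

Definition W m pas zs a := pjoint S pas zs * Qval S lam m pas zs a.

Lemma QvalE m pas zs a : Qval S lam m pas zs a =
  \sum_(z <- msupp S) pred_meas S pas zs a z *
    (rcost S (rcons pas a) (rcons zs z) +
     (if m is m'.+1 then lam * fmin (fun a' => Qval S lam m' (rcons pas a) (rcons zs z) a')
      else 0)).
Proof. by case: m. Qed.

Lemma W_rec m pas zs a : size pas = size zs ->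
  W m pas zs a = \sum_(z <- msupp S)
   (pjoint S (rcons pas a) (rcons zs z) * rcost S (rcons pas a) (rcons zs z) +
    (if m is m'.+1 then lam * fmin (fun a' => W m' (rcons pas a) (rcons zs z) a')
     else 0)).
Proof.
move=> Hs; rewrite /W QvalE mulr_sumr; apply: eq_bigr => z _.
rewrite mulrA pjoint_rcons // mulrDr; congr (_ + _); case: m => [|m]; first by rewrite mulr0.
by rewrite mulrCA (fmin_scale a) //; exact: pjoint_ge0.
Qed.

Lemma det_rcons zs z : det zs -> det (rcons zs z).
Proof. by rewrite /det -cats1 has_cat => ->. Qed.

Lemma W_det m pas zs a : det zs -> size pas = size zs -> W m pas zs a = 0.
Proof.
elim: m pas zs a => [|m IH] pas zs a Hd Hs; rewrite W_rec //; apply: big1_seq => z _.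
  by rewrite det_rcost ?det_rcons ?size_rcons ?Hs // add0r.
rewrite det_rcost ?det_rcons ?size_rcons ?Hs // add0r.
rewrite (fmin_ext (g := fun _ => 0)) ?fmin0 ?mulr0 // => a'.
by rewrite IH ?det_rcons ?size_rcons ?Hs.
Qed.

Definition Nk k : seq (option 'rV[R]_2) := nseq k None.
Definition G (bs : seq A) := pjoint S bs (Nk (size bs)) * rcost S bs (Nk (size bs)).

Lemma rcons_Nk k : rcons (Nk k) None = Nk k.+1.
Proof. by elim: k => //= k ->. Qed.

Lemma W_none m pas a :
  W m pas (Nk (size pas)) a = G (rcons pas a) +
   (if m is m'.+1 then lam * fmin (fun a' => W m' (rcons pas a) (Nk (size (rcons pas a))) a')
    else 0).
Proof.
rewrite W_rec ?size_nseq // msuppE big_cons big1_seq ?addr0.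
  by rewrite rcons_Nk /G size_rcons.
move=> z /andP [_ /rest_some [i ->]].
have Hd : det (rcons (Nk (size pas)) (Some (loc S i))).
  by rewrite /det -cats1 has_cat /= orbT.
rewrite det_rcost ?size_rcons ?size_nseq // add0r; case: m => // m.
rewrite (fmin_ext (g := fun _ => 0)) ?fmin0 ?mulr0 // => a'.
by rewrite W_det ?size_rcons ?size_nseq.
Qed.

Definition F (pas bs : seq A) := \sum_(t < size bs) lam ^+ t * G (pas ++ take t.+1 bs).

Lemma F_cons pas a bs : F pas (a :: bs) = G (rcons pas a) + lam * F (rcons pas a) bs.
Proof.
rewrite /F big_ord_recl /= take0 expr0 mul1r cats1; congr (_ + _).
rewrite mulr_sumr; apply: eq_bigr => i _.
by rewrite /bump /= add1n exprS cat_rcons mulrA.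
Qed.

Lemma W_F m pas a :
  W m pas (Nk (size pas)) a = fmin (fun b : m.-tuple A => F pas (a :: b)).
Proof.
elim: m pas a => [|m IH] pas a; rewrite W_none.
  symmetry; apply: (fmin_eq (u0 := [tuple])).
    by rewrite F_cons /F big_ord0 mulr0.
  by move=> u; rewrite tuple0 F_cons /F big_ord0 mulr0.
rewrite (fmin_ext (g := fun a' => fmin (fun b : m.-tuple A => F (rcons pas a) (a' :: b))));
  last by move=> a'; rewrite IH.
have [a1 E1] := fmin_ex (fun a' => fmin (fun b : m.-tuple A => F (rcons pas a) (a' :: b))) a.
have [b1 E2] := fmin_ex (fun b : m.-tuple A => F (rcons pas a) (a1 :: b)) (nseq_tuple m a).
symmetry; apply: (fmin_eq (u0 := [tuple of a1 :: b1])).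
  by rewrite /= F_cons E1 E2.
move=> u; rewrite (tuple_eta u) /= F_cons lerD2l; apply: ler_wpM2l => //.
apply: le_trans (fmin_le _ (thead u)) _ => /=.
exact: (fmin_le (fun b : m.-tuple A => F (rcons pas a) (thead u :: b)) [tuple of behead u]).
Qed.

Lemma size_allseqs j zs : zs \in allseqs S j -> size zs = j.
Proof.
elim: j zs => [|j IH] zs /=; first by rewrite inE => /eqP ->.
by case/allpairsPdep => z [s [_ Hs ->]] /=; rewrite (IH _ Hs).
Qed.

Lemma only_none j (g : seq (option 'rV[R]_2) -> R) :
  (forall zs, det zs -> size zs = j -> g zs = 0) ->
  \sum_(zs <- allseqs S j) g zs = g (Nk j).
Proof.
elim: j g => [|j IH] g Hg; first by rewrite /= big_seq1.
rewrite sum_allseqs msuppE big_cons [X in _ + X]big1_seq ?addr0.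
  apply: (IH (fun zs => g (None :: zs))) => zs Hd Hs; apply: Hg; by rewrite //= Hs.
move=> z /andP [_ /rest_some [i ->]]; apply: big1_seq => zs /andP [_ /size_allseqs Hs].
by apply: Hg; rewrite //= Hs.
Qed.

Lemma open_F T bs : size bs = T -> open_cost S lam T bs = F [::] bs.
Proof.
move=> Hs; rewrite /open_cost /F Hs.
under eq_bigr do rewrite mulr_sumr.
rewrite exchange_big /=; apply: eq_bigr => t _.
under eq_bigr do rewrite mulrCA.
rewrite -mulr_sumr; congr (_ * _).
rewrite (@marg t.+1 T bs (rcost S (take t.+1 bs))) ?Hs //.
have Ht : size (take t.+1 bs) = t.+1 by rewrite size_takel // Hs ltn_ord.
rewrite only_none; first by rewrite /G Ht.
by move=> zs Hd Hzs; apply: det_rcost => //; rewrite Ht Hzs.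
Qed.

Lemma J_eq T a1 : (1 <= T)%N -> J_open S lam T a1 = J_closed S lam T a1.
Proof.
move=> HT; rewrite /J_closed -[Qval _ _ _ _ _ _]mul1r -pjoint_nil.
change (J_open S lam T a1 = W T.-1 [::] (Nk (size ([::] : seq A))) a1).
rewrite W_F /J_open; apply: fmin_ext => b.
by rewrite open_F //= size_tuple prednK.
Qed.

End Model.

Theorem mainTheorem1 (R : realFieldType) (n : nat) (A : finType)
    (x : 'I_n -> 'rV[R]_2) (FOV : A -> pred 'rV[R]_2)
    (r : R) (w : 'I_n -> R) (Pd c lam : R) (T : nat) :
  0 <= r <= 1 ->
  (forall i, 0 <= w i) -> \sum_(i < n) w i = 1 ->
  0 < Pd <= 1 ->
  0 < c ->
  0 <= lam <= 1 ->
  (1 <= T)%N ->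
  forall argmin : (A -> R) -> A,
    (forall (f : A -> R) (a : A), f (argmin f) <= f a) ->
    argmin (J_open (Scenario x FOV r w Pd c) lam T) =
    argmin (J_closed (Scenario x FOV r w Pd c) lam T).
Proof.
move=> /andP [Hr0 Hr1] Hw Hws /andP [Hpd0 Hpd1] _ /andP [Hlam _] HT argmin _.
have -> : J_open (Scenario x FOV r w Pd c) lam T = J_closed (Scenario x FOV r w Pd c) lam T.
  apply: functional_extensionality => a1; apply: J_eq => //; exact: ltW.
by [].
Qed.
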